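(* Let $\psi(x)=(x(1-x))^{0.697}\bigl(5-\sqrt{x(1-x)}\bigr)$ for $x\in[0,1]$. For every balanced tetrahedral erasure channel $W$ with $0<H(W)<1$ and $Q(W)\ge 9/7$, $$\frac{\psi(H(W^{s}))+\psi(H(W^{p}))}{2\,\psi(H(W))}<0.818.$$
   Context: $\mathrm{TEC}(p,q,r,s,t)$ denotes a tetrahedral erasure channel with parameters $p,q,r,s,t\ge0$ summing to $1$. Its entropy is $H=\frac{q+r+s}{2}+t$, its edge mass is $E=q+r+s$, and its Quetelet index is $Q=E/(H(1-H))$. It is balanced if $q=r=s$. For $W=\mathrm{TEC}(p,q,r,s,t)$, the serial child is $W^{s}=\mathrm{TEC}(p^2,\ ps+sq+qp,\ pq+qr+rp,\ pr+rs+sp,\ 1-\text{(sum of the other four)})$ and the parallel child is $W^{p}=\mathrm{TEC}(1-\text{(sum of the other four)},\ ts+sq+qt,\ tq+qr+rt,\ tr+rs+st,\ t^2)$. *)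

(* Defs.v *)
From Stdlib Require Import Reals Lra.
Open Scope R_scope.

Record TEC := mkTEC { tp : R; tq : R; tr : R; ts : R; tt : R }.

Definition valid (W : TEC) : Prop :=
  0 <= tp W /\ 0 <= tq W /\ 0 <= tr W /\ 0 <= ts W /\ 0 <= tt W /\
  tp W + tq W + tr W + ts W + tt W = 1.

Definition entropy (W : TEC) : R := (tq W + tr W + ts W) / 2 + tt W.
Definition edge_mass (W : TEC) : R := tq W + tr W + ts W.
Definition quetelet (W : TEC) : R :=
  edge_mass W / (entropy W * (1 - entropy W)).
Definition balanced (W : TEC) : Prop := tq W = tr W /\ tr W = ts W.

Definition serial_child (W : TEC) : TEC :=
  let p := tp W in let q := tq W in let r := tr W in let s := ts W in
  let a := p ^ 2 in
  let b := p * s + s * q + q * p in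
  let c := p * q + q * r + r * p in
  let d := p * r + r * s + s * p in
  mkTEC a b c d (1 - (a + b + c + d)).

Definition parallel_child (W : TEC) : TEC :=
  let t := tt W in let q := tq W in let r := tr W in let s := ts W in
  let b := t * s + s * q + q * t in
  let c := t * q + q * r + r * t in
  let d := t * r + r * s + s * t in
  let e := t ^ 2 in
  mkTEC (1 - (b + c + d + e)) b c d e.

(* real power y^a for y >= 0, with the convention 0^a = 0 (a > 0) *)
Definition rpow (y a : R) : R := if Rle_dec y 0 then 0 else Rpower y a.

Definition psi (x : R) : R :=
  rpow (x * (1 - x)) (697 / 1000) * (5 - sqrt (x * (1 - x))).

(* Main.v *)
Require Import Defs.
From Stdlib Require Import Reals.
From Stdlib Require Import ZArith Lra Psatz Lia List.
Open Scope R_scope.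

Open Scope R_scope.

Definition aR : R := 697/1000.
Definition bR : R := aR + /2.
Definition gg (y : R) : R := 5 * Rpower y aR - Rpower y bR.
Definition gg' (y : R) : R := 5 * (aR * Rpower y (aR - 1)) - bR * Rpower y (bR - 1).

Lemma dpl_eq f x l l' : derivable_pt_lim f x l -> l = l' -> derivable_pt_lim f x l'.
Proof. intros H ->; exact H. Qed.

Lemma d_gg y : 0 < y -> derivable_pt_lim gg y (gg' y).
Proof.
  intros Hy. unfold gg, gg'.
  apply (derivable_pt_lim_minus (fun z => 5 * Rpower z aR) (fun z => Rpower z bR)).
  - apply (derivable_pt_lim_scal (fun z => Rpower z aR)). now apply derivable_pt_lim_power.
  - now apply derivable_pt_lim_power.
Qed.

Lemma d_gg_shift y d : 0 < y + d -> derivable_pt_lim (fun z => gg (z + d)) y (gg' (y + d)).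
Proof.
  intros Hy.
  apply dpl_eq with (gg' (y + d) * 1); [|ring].
  apply (derivable_pt_lim_comp (fun z => z + d) gg).
  - apply dpl_eq with (1 + 0); [|ring].
    apply (derivable_pt_lim_plus (fun z => z) (fun _ => d)).
    + apply derivable_pt_lim_id.
    + apply derivable_pt_lim_const.
  - now apply d_gg.
Qed.

Lemma Rpower_pos x e : 0 < Rpower x e.
Proof. unfold Rpower; apply exp_pos. Qed.

Lemma gg'_decr x y : 0 < x -> x <= y -> gg' y <= gg' x.
Proof.
  intros Hx Hxy. unfold gg'.
  assert (H1 : Rpower y (aR - 1) <= Rpower x (aR - 1)).
  { replace (aR - 1) with (- (1 - aR)) by ring.
    rewrite !Rpower_Ropp.
    apply Rinv_le_contravar. apply Rpower_pos.
    apply Rle_Rpower_l. unfold aR; lra. lra. }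
  assert (H2 : Rpower x (bR - 1) <= Rpower y (bR - 1)).
  { apply Rle_Rpower_l. unfold bR, aR; lra. lra. }
  unfold bR, aR in *. nra.
Qed.

Lemma gg'_pos y : 0 < y -> y <= /4 -> 0 < gg' y.
Proof.
  intros Hy Hy4. unfold gg'.
  replace (bR - 1) with ((aR - 1) + /2) by (unfold bR; ring).
  rewrite Rpower_plus, Rpower_sqrt by lra.
  assert (Hs : sqrt y <= /2).
  { replace (/2) with (sqrt (/4)). apply sqrt_le_1_alt; lra.
    rewrite <- (sqrt_Rsqr (/2)) by lra. unfold Rsqr. f_equal; field. }
  assert (Hp := Rpower_pos y (aR - 1)).
  assert (0 <= sqrt y) by apply sqrt_pos.
  unfold bR, aR in *. nra.
Qed.

Lemma gg_incr x y : 0 < x -> x <= y -> y <= /4 -> gg x <= gg y.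
Proof.
  intros Hx Hxy Hy.
  destruct (Req_dec x y) as [->|Hne]; [lra|].
  destruct (MVT_cor2 gg gg' x y) as [c [Hc1 Hc2]]. lra.
  intros c Hc. apply d_gg. lra.
  assert (0 < gg' c) by (apply gg'_pos; lra). nra.
Qed.

Lemma gg_incr_step x1 x2 d : 0 < x1 -> x1 <= x2 -> 0 <= d ->
  gg (x2 + d) - gg x2 <= gg (x1 + d) - gg x1.
Proof.
  intros Hx Hxy Hd.
  destruct (Req_dec x1 x2) as [->|Hne]; [lra|].
  destruct (MVT_cor2 (fun z => gg (z + d) - gg z) (fun z => gg' (z + d) - gg' z) x1 x2)
    as [c [Hc1 Hc2]]. lra.
  intros c Hc.
  apply (derivable_pt_lim_minus (fun z => gg (z + d)) gg).
  apply d_gg_shift; lra. apply d_gg; lra.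
  assert (gg' (c + d) - gg' c <= 0) by (assert (H := gg'_decr c (c+d)); lra).
  nra.
Qed.

Lemma concave_swap ys ys' yp yp' :
  0 < yp' -> yp' <= yp -> yp <= ys -> ys <= /4 -> 0 < ys' -> ys' <= /4 ->
  ys' - ys <= yp - yp' ->
  gg ys' + gg yp' <= gg ys + gg yp.
Proof.
  intros H1 H2 H3 H4 H5 H6 H7.
  destruct (Rle_lt_dec ys' ys) as [Hle|Hlt].
  - assert (gg ys' <= gg ys) by (apply gg_incr; lra).
    assert (gg yp' <= gg yp) by (apply gg_incr; lra). lra.
  - set (d := ys' - ys).
    assert (A := gg_incr_step yp' ys d H1 ltac:(lra) ltac:(unfold d; lra)).
    replace (ys + d) with ys' in A by (unfold d; ring).
    assert (gg (yp' + d) <= gg yp) by (apply gg_incr; unfold d in *; lra).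
    lra.
Qed.

Local Open Scope Z_scope.


Definition P : Z := 40.
Definition ONE : Z := 1099511627776.
Definition mul_dn (a b : Z) : Z := Z.shiftr (a*b) P.
Definition mul_up (a b : Z) : Z := - Z.shiftr (- (a*b)) P.
Definition inv_dn (a : Z) : Z := (ONE*ONE) / a.
Definition inv_up (a : Z) : Z := - ((- (ONE*ONE)) / a).
Definition sqlo (a : Z) : Z := Z.sqrt (a * ONE).
Definition sqhi (a : Z) : Z := Z.sqrt (a * ONE) + 1.

Fixpoint powup (n:nat) (x:Z) : Z := match n with O => ONE | S m => mul_up x (powup m x) end.
Definition S0 : Z := ONE - 4194304.
Definition Ld : Z := Eval vm_compute in powup 697 S0.
Definition Md : Z := Eval vm_compute in powup 1000 (inv_up S0).
Definition Lu : Z := Eval vm_compute in powup 697 (inv_up S0).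
Definition Mu : Z := Eval vm_compute in powup 1000 S0.
Definition aup : Z := 766359604560.
Definition omaup : Z := 333152023217.
Definition cup : Z := 151463336480.
Definition cdn : Z := 151463336479.
Definition Kdn : Z := 1798801023041.

Definition bnd (z : Z*Z) (x:Z) : Z :=
  mul_up (fst z) omaup + mul_up (mul_up (mul_up aup (fst z)) (snd z)) x.
Definition zdown (z:Z*Z) : Z*Z := (mul_up (fst z) Ld, mul_up (snd z) Md).
Definition zup (z:Z*Z) : Z*Z := (mul_up (fst z) Lu, mul_up (snd z) Mu).

Fixpoint improve (n:nat) (x:Z) (z:Z*Z) : Z*Z :=
  match n with O => z | S m =>
    if ONE <? mul_up (snd z) x then improve m x (zup z) else
    let zd := zdown z in
    if mul_up (snd zd) x <=? ONE then improve m x zd else z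
  end.

Record bds := Bds { bAl : Z; bCl : Z; bFl : Z; bGl : Z; bBl : Z;
  bul : Z; buh : Z; bvl : Z; bvh : Z; byl : Z; byh : Z }.

Definition bounds (h1 h2 : Z) : bds :=
  let omh1 := ONE - h1 in let omh2 := ONE - h2 in
  let Ah := 2*ONE - h1 + mul_up (mul_up cup h2) (mul_up omh1 omh1) in
  let Al := 2*ONE - h2 + mul_dn (mul_dn cdn h1) (mul_dn omh2 omh2) in
  let Ch := ONE - mul_dn cdn (mul_dn h1 h1) in
  let Cl := ONE - mul_up cup (mul_up h2 h2) in
  let Fh := ONE - mul_dn cdn (mul_dn omh2 omh2) in
  let Fl := ONE - mul_up cup (mul_up omh1 omh1) in
  let Gh := ONE - mul_dn (mul_dn h1 h1) Fl in
  let Gl := ONE - mul_up (mul_up h2 h2) Fh in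
  Bds Al Cl Fl Gl omh2
      (mul_dn (mul_dn Al omh2) Cl) (mul_up (mul_up Ah omh1) Ch)
      (mul_dn (mul_dn (mul_dn h1 Fl) Gl) (inv_dn omh1))
      (mul_up (mul_up (mul_up h2 Fh) Gh) (inv_up omh2))
      (mul_dn h1 omh1) (mul_up h2 omh2).

Definition cell_ok (b : bds) (zu zv : Z*Z) : bool :=
  (0 <? bAl b) && (0 <? bCl b) && (0 <? bFl b) && (0 <? bGl b) && (0 <? bBl b) &&
  (mul_up (buh b) (byh b) <=? 25*ONE) && (mul_up (bvh b) (byh b) <=? 25*ONE) &&
  (sqhi (byh b) <=? 5*ONE) &&
  (mul_up (bnd zu (buh b)) (5*ONE - sqlo (mul_dn (bul b) (byl b)))
   + mul_up (bnd zv (bvh b)) (5*ONE - sqlo (mul_dn (bvl b) (byl b)))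
   <? mul_dn Kdn (5*ONE - sqhi (byh b))).

Definition cell_check (h1 h2 : Z) (zu zv : Z*Z) : bool :=
  (0 <=? h1) && (2*h2 <=? ONE) && cell_ok (bounds h1 h2) zu zv.

Fixpoint go (f:nat) (n:nat) (k sh:Z) (zu zv : Z*Z) : bool :=
  let h1 := Z.shiftl k sh in let h2 := Z.shiftl (k+1) sh in
  let b := bounds h1 h2 in
  let zu' := improve f (buh b) zu in
  let zv' := improve f (bvh b) zv in
  if cell_check h1 h2 zu' zv' then true else
  match n with O => false | S m => if sh <=? 0 then false else
      go f m (2*k) (sh-1) zu' zv' && go f m (2*k+1) (sh-1) zu' zv'
  end.
Definition z0 : Z*Z := (ONE,ONE).

Local Open Scope R_scope.

Definition fx (n : Z) : R := IZR n / IZR ONE.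

Lemma ONE_pos : 0 < IZR ONE.
Proof. unfold ONE. apply IZR_lt. reflexivity. Qed.

Lemma ONE_pow : ONE = (2 ^ P)%Z.
Proof. reflexivity. Qed.

Lemma fx_add a b : fx (a + b) = fx a + fx b.
Proof. unfold fx. rewrite plus_IZR. field. apply Rgt_not_eq, ONE_pos. Qed.
Lemma fx_sub a b : fx (a - b) = fx a - fx b.
Proof. unfold fx. rewrite minus_IZR. field. apply Rgt_not_eq, ONE_pos. Qed.
Lemma fx_ONE : fx ONE = 1.
Proof. unfold fx. field. apply Rgt_not_eq, ONE_pos. Qed.
Lemma fx_mulONE c : fx (c * ONE) = IZR c.
Proof. unfold fx. rewrite mult_IZR. field. apply Rgt_not_eq, ONE_pos. Qed.
Lemma fx_le a b : (a <= b)%Z -> fx a <= fx b.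
Proof. intros H. unfold fx. apply Rmult_le_compat_r. left; apply Rinv_0_lt_compat, ONE_pos. now apply IZR_le. Qed.
Lemma fx_lt a b : (a < b)%Z -> fx a < fx b.
Proof. intros H. unfold fx. apply Rmult_lt_compat_r. apply Rinv_0_lt_compat, ONE_pos. now apply IZR_lt. Qed.
Lemma fx_nonneg a : (0 <= a)%Z -> 0 <= fx a.
Proof. intros H. unfold fx. apply Rmult_le_pos. now apply IZR_le. left; apply Rinv_0_lt_compat, ONE_pos. Qed.
Lemma fx_pos a : (0 < a)%Z -> 0 < fx a.
Proof. intros H. unfold fx. apply Rmult_lt_0_compat. now apply IZR_lt. apply Rinv_0_lt_compat, ONE_pos. Qed.
Lemma fx0 : fx 0 = 0.
Proof. unfold fx; simpl; field; apply Rgt_not_eq, ONE_pos. Qed.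
Lemma fx_nonneg_inv a : 0 <= fx a -> (0 <= a)%Z.
Proof. intros H. destruct (Z_lt_le_dec a 0) as [h|h]; auto. apply fx_lt in h. rewrite fx0 in h. lra. Qed.
Lemma fx_pos_inv a : 0 < fx a -> (0 < a)%Z.
Proof. intros H. destruct (Z_lt_le_dec 0 a) as [h|h]; auto. apply fx_le in h. rewrite fx0 in h. lra. Qed.

Lemma shiftr_P a : Z.shiftr a P = (a / ONE)%Z.
Proof. rewrite Z.shiftr_div_pow2 by (unfold P; lia). reflexivity. Qed.

Lemma mul_dn_le a b : fx (mul_dn a b) <= fx a * fx b.
Proof.
  unfold mul_dn. rewrite shiftr_P.
  assert (H : (ONE * ((a*b) / ONE) <= a * b)%Z) by (apply Z.mul_div_le; reflexivity).
  apply IZR_le in H. rewrite !mult_IZR in H.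
  unfold fx. assert (Ho := ONE_pos).
  apply Rmult_le_reg_r with (IZR ONE * IZR ONE). nra.
  replace (IZR ((a * b) / ONE) / IZR ONE * (IZR ONE * IZR ONE)) with (IZR ONE * IZR ((a*b)/ONE)) by (field; lra).
  replace (IZR a / IZR ONE * (IZR b / IZR ONE) * (IZR ONE * IZR ONE)) with (IZR a * IZR b) by (field; lra).
  exact H.
Qed.

Lemma mul_up_ge a b : fx a * fx b <= fx (mul_up a b).
Proof.
  unfold mul_up. rewrite shiftr_P.
  assert (H : (ONE * ((- (a*b)) / ONE) <= - (a * b))%Z) by (apply Z.mul_div_le; reflexivity).
  apply IZR_le in H. rewrite !mult_IZR, opp_IZR, mult_IZR in H.
  unfold fx. rewrite opp_IZR. assert (Ho := ONE_pos).
  apply Rmult_le_reg_r with (IZR ONE * IZR ONE). nra.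
  replace (- IZR ((- (a * b)) / ONE) / IZR ONE * (IZR ONE * IZR ONE)) with (- (IZR ONE * IZR ((- (a*b))/ONE))) by (field; lra).
  replace (IZR a / IZR ONE * (IZR b / IZR ONE) * (IZR ONE * IZR ONE)) with (IZR a * IZR b) by (field; lra).
  lra.
Qed.

Lemma mul_dn_nonneg a b : (0 <= a)%Z -> (0 <= b)%Z -> (0 <= mul_dn a b)%Z.
Proof. intros. unfold mul_dn. rewrite shiftr_P. apply Z.div_pos. nia. reflexivity. Qed.

Lemma inv_dn_le a : (0 < a)%Z -> fx (inv_dn a) <= / fx a.
Proof.
  intros Ha. unfold inv_dn.
  assert (H : (a * ((ONE*ONE) / a) <= ONE*ONE)%Z) by (apply Z.mul_div_le; lia).
  apply IZR_le in H. rewrite !mult_IZR in H. apply IZR_lt in Ha.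
  unfold fx. assert (Ho := ONE_pos).
  replace (/ (IZR a / IZR ONE)) with (IZR ONE / IZR a) by (field; lra).
  apply Rmult_le_reg_r with (IZR ONE * IZR a). nra.
  replace (IZR ((ONE * ONE) / a) / IZR ONE * (IZR ONE * IZR a)) with (IZR a * IZR ((ONE*ONE)/a)) by (field; lra).
  replace (IZR ONE / IZR a * (IZR ONE * IZR a)) with (IZR ONE * IZR ONE) by (field; lra).
  exact H.
Qed.

Lemma inv_up_ge a : (0 < a)%Z -> / fx a <= fx (inv_up a).
Proof.
  intros Ha. unfold inv_up.
  assert (H : (a * ((- (ONE*ONE)) / a) <= - (ONE*ONE))%Z) by (apply Z.mul_div_le; lia).
  apply IZR_le in H. rewrite !mult_IZR, opp_IZR, mult_IZR in H. apply IZR_lt in Ha.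
  unfold fx. rewrite opp_IZR. assert (Ho := ONE_pos).
  replace (/ (IZR a / IZR ONE)) with (IZR ONE / IZR a) by (field; lra).
  apply Rmult_le_reg_r with (IZR ONE * IZR a). nra.
  replace (- IZR ((- (ONE * ONE)) / a) / IZR ONE * (IZR ONE * IZR a)) with (- (IZR a * IZR ((- (ONE*ONE))/a))) by (field; lra).
  replace (IZR ONE / IZR a * (IZR ONE * IZR a)) with (IZR ONE * IZR ONE) by (field; lra).
  lra.
Qed.

Lemma inv_dn_nonneg a : (0 < a)%Z -> (0 <= inv_dn a)%Z.
Proof. intros. unfold inv_dn. apply Z.div_pos; [unfold ONE; lia|lia]. Qed.

Lemma sqlo_le a : fx (sqlo a) <= sqrt (fx a).
Proof.
  unfold sqlo. assert (Ho := ONE_pos).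
  destruct (Z_lt_le_dec a 0) as [Hn|Hn].
  - rewrite Z.sqrt_neg by (unfold ONE in *; lia). unfold fx at 1. replace (IZR 0 / IZR ONE) with 0 by (simpl; field; lra). apply sqrt_pos.
  - assert (Hnn : (0 <= a * ONE)%Z) by (unfold ONE; lia).
    destruct (Z.sqrt_spec _ Hnn) as [H1 _].
    assert (H0 := Z.sqrt_nonneg (a * ONE)).
    set (s := Z.sqrt (a * ONE)) in *.
    apply IZR_le in H1. apply IZR_le in H0. rewrite !mult_IZR in H1.
    rewrite <- (sqrt_square (fx s)) by (unfold fx; apply Rmult_le_pos; [lra|left; apply Rinv_0_lt_compat; lra]).
    apply sqrt_le_1_alt. unfold fx.
    apply Rmult_le_reg_r with (IZR ONE * IZR ONE). nra.
    replace (IZR s / IZR ONE * (IZR s / IZR ONE) * (IZR ONE * IZR ONE)) with (IZR s * IZR s) by (field; lra).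
    replace (IZR a / IZR ONE * (IZR ONE * IZR ONE)) with (IZR a * IZR ONE) by (field; lra).
    exact H1.
Qed.

Lemma sqhi_ge a : (0 <= a)%Z -> sqrt (fx a) <= fx (sqhi a).
Proof.
  intros Ha. unfold sqhi. assert (Ho := ONE_pos).
  assert (Hnn : (0 <= a * ONE)%Z) by (unfold ONE; lia).
  destruct (Z.sqrt_spec _ Hnn) as [_ H1].
  assert (H0 := Z.sqrt_nonneg (a * ONE)).
  set (s := Z.sqrt (a * ONE)) in *.
  rewrite <- Z.add_1_r in H1.
  assert (Hf : 0 <= fx (s + 1)) by (apply fx_nonneg; lia).
  apply IZR_lt in H1. apply IZR_le in H0. rewrite !mult_IZR, plus_IZR in H1.
  rewrite <- (sqrt_square (fx (s + 1))) by exact Hf.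
  apply sqrt_le_1_alt. unfold fx. rewrite plus_IZR.
  apply Rmult_le_reg_r with (IZR ONE * IZR ONE). nra.
  replace ((IZR s + IZR 1) / IZR ONE * ((IZR s + IZR 1) / IZR ONE) * (IZR ONE * IZR ONE)) with ((IZR s + 1) * (IZR s + 1)) by (simpl; field; lra).
  replace (IZR a / IZR ONE * (IZR ONE * IZR ONE)) with (IZR a * IZR ONE) by (field; lra).
  lra.
Qed.

Lemma mup x y a b : 0 <= x -> 0 <= y -> x <= fx a -> y <= fx b -> x * y <= fx (mul_up a b).
Proof. intros. eapply Rle_trans; [|apply mul_up_ge]. apply Rmult_le_compat; lra. Qed.
Lemma mdn x y a b : 0 <= fx a -> 0 <= fx b -> fx a <= x -> fx b <= y -> fx (mul_dn a b) <= x * y.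
Proof. intros. eapply Rle_trans; [apply mul_dn_le|]. apply Rmult_le_compat; lra. Qed.

Local Open Scope R_scope.

Lemma Rpower_1 y : Rpower 1 y = 1.
Proof. unfold Rpower. rewrite ln_1, Rmult_0_r. apply exp_0. Qed.

Lemma pow_tangent z : 0 < z -> Rpower z aR <= 1 - aR + aR * z.
Proof.
  intros Hz. unfold Rpower.
  set (L := ln z). set (m := aR * L).
  assert (E1 := exp_ineq1_le (L - m)).
  assert (E2 := exp_ineq1_le (- m)).
  assert (Hz' : exp L = z) by (unfold L; apply exp_ln; lra).
  assert (Hm := exp_pos m).
  assert (exp L = exp m * exp (L - m)) by (rewrite <- exp_plus; f_equal; ring).
  assert (1 = exp m * exp (- m)) by (rewrite <- exp_plus, <- exp_0; f_equal; ring).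
  assert (HA : 0 <= aR <= 1) by (unfold aR; lra).
  assert (exp m * (1 + (L - m)) <= exp L) by (rewrite H; apply Rmult_le_compat_l; lra).
  assert (exp m * (1 + - m) <= 1) by (rewrite H0 at 2; apply Rmult_le_compat_l; lra).
  assert (aR * (exp m * (1 + (L - m))) + (1 - aR) * (exp m * (1 + - m)) = exp m) by (unfold m; ring).
  nra.
Qed.

Definition zvalid (z : Z * Z) : Prop :=
  exists c, 0 < c /\ Rpower c aR <= fx (fst z) /\ / c <= fx (snd z).

Lemma zvalid_z0 : zvalid z0.
Proof. exists 1. simpl. rewrite Rpower_1, fx_ONE. lra. Qed.

Lemma zvalid_pos z : zvalid z -> 0 < fx (fst z) /\ 0 < fx (snd z).
Proof.
  intros [c [Hc [H1 H2]]]. split.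
  - eapply Rlt_le_trans; [apply Rpower_pos|exact H1].
  - eapply Rlt_le_trans; [apply Rinv_0_lt_compat, Hc|exact H2].
Qed.

Lemma tangent z x X : zvalid z -> 0 < x -> x <= fx X -> Rpower x aR <= fx (bnd z X).
Proof.
  intros Hv Hx HX. destruct (zvalid_pos z Hv) as [HT HD].
  destruct Hv as [c [Hc [H1 H2]]].
  set (T := fx (fst z)) in *. set (D := fx (snd z)) in *.
  assert (Hxc : x = c * (x / c)) by (field; lra).
  assert (Hrx : Rpower x aR = Rpower c aR * Rpower (x / c) aR).
  { rewrite Hxc at 1. rewrite Rpower_mult_distr; auto. apply Rdiv_lt_0_compat; lra. }
  assert (Htg := pow_tangent (x / c) ltac:(apply Rdiv_lt_0_compat; lra)).
  assert (Hpc := Rpower_pos c aR).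
  assert (HA : 0 < aR < 1) by (unfold aR; lra).
  assert (Hxd : x / c <= x * D) by (unfold Rdiv; apply Rmult_le_compat_l; lra).
  assert (Hstep : Rpower x aR <= T * (1 - aR) + aR * T * D * x).
  { rewrite Hrx. apply Rle_trans with (Rpower c aR * (1 - aR + aR * (x / c))).
    apply Rmult_le_compat_l; lra.
    apply Rle_trans with (T * (1 - aR + aR * (x * D))).
    apply Rmult_le_compat; try lra. assert (0 < x / c) by (apply Rdiv_lt_0_compat; lra). nra.
    nra. nra. }
  eapply Rle_trans; [exact Hstep|]. unfold bnd. rewrite fx_add.
  assert (Hom : 1 - aR <= fx omaup) by (unfold fx, omaup, ONE, aR; lra).
  assert (Hau : aR <= fx aup) by (unfold fx, aup, ONE, aR; lra).
  apply Rplus_le_compat.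
  - apply mup; try lra. unfold T; lra.
  - assert (0 <= aR*T) by (apply Rmult_le_pos; lra).
    assert (0 <= aR*T*D) by (apply Rmult_le_pos; lra).
    apply (mup (aR*T*D) x); try lra.
    apply (mup (aR*T) D); try lra; try (unfold D; lra).
    apply (mup aR T); try lra. unfold T; lra.
Qed.

Lemma Rpow_root x : 0 < x -> Rpower (x ^ 1000) aR = x ^ 697.
Proof.
  intros Hx. rewrite <- (Rpower_pow 1000 x Hx), Rpower_mult, <- (Rpower_pow 697 x Hx).
  f_equal. rewrite !INR_IZR_INZ. simpl (Z.of_nat _). unfold aR. field.
Qed.

Lemma powup_ge r n x : 0 <= r -> r <= fx x -> r ^ n <= fx (powup n x).
Proof.
  intros Hr Hx. induction n as [|n IH]; simpl.
  - rewrite fx_ONE. lra.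
  - apply mup; auto. apply pow_le; lra.
Qed.

Definition rd : R := fx S0.
Definition ru : R := / rd.
Lemma rd_pos : 0 < rd. Proof. unfold rd. apply fx_pos. reflexivity. Qed.
Lemma ru_pos : 0 < ru. Proof. unfold ru. apply Rinv_0_lt_compat, rd_pos. Qed.
Lemma ru_le : ru <= fx (inv_up S0). Proof. unfold ru, rd. apply inv_up_ge. reflexivity. Qed.

Lemma F_Ld : rd ^ 697 <= fx Ld.
Proof. replace Ld with (powup 697 S0) by (vm_compute; reflexivity). apply powup_ge. left; apply rd_pos. unfold rd; lra. Qed.
Lemma F_Mu : rd ^ 1000 <= fx Mu.
Proof. replace Mu with (powup 1000 S0) by (vm_compute; reflexivity). apply powup_ge. left; apply rd_pos. unfold rd; lra. Qed.
Lemma F_Lu : ru ^ 697 <= fx Lu.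
Proof. replace Lu with (powup 697 (inv_up S0)) by (vm_compute; reflexivity). apply powup_ge. left; apply ru_pos. apply ru_le. Qed.
Lemma F_Md : ru ^ 1000 <= fx Md.
Proof. replace Md with (powup 1000 (inv_up S0)) by (vm_compute; reflexivity). apply powup_ge. left; apply ru_pos. apply ru_le. Qed.
Lemma rd_ru : ru = / rd. Proof. reflexivity. Qed.

Lemma zvalid_step z r L M : zvalid z -> 0 < r -> r ^ 697 <= fx L -> / r ^ 1000 <= fx M ->
  zvalid (mul_up (fst z) L, mul_up (snd z) M).
Proof.
  intros Hv Hr HL HM. destruct (zvalid_pos z Hv) as [HT HD].
  destruct Hv as [c [Hc [H1 H2]]].
  assert (Hr1 : 0 < r ^ 1000) by (apply pow_lt; lra).
  exists (c * r ^ 1000). split; [nra|]. cbn [fst snd]. split.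
  - rewrite <- Rpower_mult_distr by lra. rewrite Rpow_root by lra.
    apply mup; try lra. left; apply Rpower_pos. left; apply pow_lt; lra.
  - rewrite Rinv_mult. apply mup; try lra.
    left; apply Rinv_0_lt_compat; lra. left; apply Rinv_0_lt_compat; lra.
Qed.

Lemma zvalid_zdown z : zvalid z -> zvalid (zdown z).
Proof.
  intros Hv. unfold zdown. apply (zvalid_step z rd Ld Md Hv rd_pos F_Ld).
  rewrite <- pow_inv. change (/ rd) with ru. exact F_Md.
Qed.

Lemma zvalid_zup z : zvalid z -> zvalid (zup z).
Proof.
  intros Hv. unfold zup. apply (zvalid_step z ru Lu Mu Hv ru_pos F_Lu).
  rewrite <- pow_inv. unfold ru. rewrite Rinv_inv. exact F_Mu.
Qed.

Lemma zvalid_improve n x z : zvalid z -> zvalid (improve n x z).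
Proof.
  revert z. induction n as [|n IH]; intros z Hv; [exact Hv|].
  change (improve (S n) x z) with
    (if (ONE <? mul_up (snd z) x)%Z then improve n x (zup z) else
     let zd := zdown z in
     if (mul_up (snd zd) x <=? ONE)%Z then improve n x zd else z).
  destruct (ONE <? mul_up (snd z) x)%Z. apply IH, zvalid_zup, Hv.
  cbv zeta. destruct (mul_up (snd (zdown z)) x <=? ONE)%Z. apply IH, zvalid_zdown, Hv. exact Hv.
Qed.

Local Open Scope R_scope.

Definition cR : R := 81/588.
Definition uR (h : R) : R := (2 - h + cR*h*((1-h)*(1-h)))*(1-h)*(1 - cR*(h*h)).
Definition FR (h : R) : R := 1 - cR*((1-h)*(1-h)).
Definition vR (h : R) : R := h * FR h * (1 - (h*h) * FR h) / (1-h).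
Definition yR (h : R) : R := h*(1-h).
Definition KR : R := 1636/1000.
Definition Gp (h : R) : Prop :=
  Rpower (uR h) aR * (5 - sqrt (uR h * yR h)) + Rpower (vR h) aR * (5 - sqrt (vR h * yR h))
  < KR * (5 - sqrt (yR h)).

Ltac fxs := repeat rewrite ?fx_add, ?fx_sub, ?fx_mulONE, ?fx_ONE.

Lemma cbounds : fx cdn <= cR <= fx cup /\ 0 <= fx cdn.
Proof. unfold fx, cdn, cup, ONE, cR. lra. Qed.

Lemma bounds_sound h1 h2 h : (0 <= h1)%Z -> (2*h2 <= ONE)%Z -> fx h1 <= h <= fx h2 -> 0 < h ->
  (0 < bAl (bounds h1 h2))%Z -> (0 < bCl (bounds h1 h2))%Z -> (0 < bFl (bounds h1 h2))%Z ->
  (0 < bGl (bounds h1 h2))%Z -> (0 < bBl (bounds h1 h2))%Z ->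
  (fx (bul (bounds h1 h2)) <= uR h <= fx (buh (bounds h1 h2)) /\ 0 < uR h /\ 0 <= fx (bul (bounds h1 h2))) /\
  (fx (bvl (bounds h1 h2)) <= vR h <= fx (bvh (bounds h1 h2)) /\ 0 < vR h /\ 0 <= fx (bvl (bounds h1 h2))) /\
  (fx (byl (bounds h1 h2)) <= yR h <= fx (byh (bounds h1 h2)) /\ 0 <= fx (byl (bounds h1 h2))).
Proof.
  intros H1 H2 Hh Hh0 PA PC PF PG PB.
  unfold bounds in *. cbv zeta in *. cbn [bAl bCl bFl bGl bBl bul buh bvl bvh byl byh] in *.
  destruct cbounds as [[Cd Cu] Cd0].
  assert (Hr1 : 0 <= (fx h1)) by (apply fx_nonneg; auto).
  assert (Hr2 : (fx h2) <= 1/2).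
  { apply fx_le in H2. rewrite fx_ONE in H2.
    assert (fx (2*h2)%Z = 2 * (fx h2)) by (unfold fx; rewrite mult_IZR; field; apply Rgt_not_eq, ONE_pos).
    lra. }
  assert (Eo1 : fx (ONE - h1) = 1 - (fx h1)) by (fxs; reflexivity).
  assert (Eo2 : fx (ONE - h2) = 1 - (fx h2)) by (fxs; reflexivity).
  set (omh1 := (ONE - h1)%Z) in *. set (omh2 := (ONE - h2)%Z) in *.
  assert (Po2 : (0 < omh2)%Z) by exact PB.
  assert (H12 : (h1 <= h2)%Z).
  { destruct (Z_le_gt_dec h1 h2) as [?|Hg]; auto. apply Z.gt_lt, fx_lt in Hg. lra. }
  assert (Po1 : (0 < omh1)%Z) by (unfold omh1, omh2 in *; lia).
  assert (Ho2 : 0 < 1 - (fx h2)) by (rewrite <- Eo2; apply fx_pos; auto).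
  assert (Hb : 0 < 1 - h) by lra.
  assert (Ech : fx (mul_dn cdn h1) <= cR * h /\ cR * h <= fx (mul_up cup h2) /\ 0 <= fx (mul_dn cdn h1)).
  { split; [|split].
    - apply mdn; lra.
    - apply mup; lra.
    - apply fx_nonneg, mul_dn_nonneg; [unfold cdn; lia|auto]. }
  assert (Eom : fx (mul_dn omh2 omh2) <= (1-h)*(1-h) /\ (1-h)*(1-h) <= fx (mul_up omh1 omh1)
                /\ 0 <= fx (mul_dn omh2 omh2)).
  { split; [|split].
    - apply mdn; lra.
    - apply mup; lra.
    - apply fx_nonneg, mul_dn_nonneg; lia. }
  assert (Ehh : fx (mul_dn h1 h1) <= h*h /\ h*h <= fx (mul_up h2 h2) /\ 0 <= fx (mul_dn h1 h1)).
  { split; [|split].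
    - apply mdn; lra.
    - apply mup; lra.
    - apply fx_nonneg, mul_dn_nonneg; lia. }
  set (A := 2 - h + cR*h*((1-h)*(1-h))).
  assert (EA : fx (2*ONE - h2 + mul_dn (mul_dn cdn h1) (mul_dn omh2 omh2)) <= A
            /\ A <= fx (2*ONE - h1 + mul_up (mul_up cup h2) (mul_up omh1 omh1))).
  { fxs. split.
    - assert (fx (mul_dn (mul_dn cdn h1) (mul_dn omh2 omh2)) <= cR*h*((1-h)*(1-h))) by (apply mdn; lra).
      unfold A; lra.
    - assert (cR*h*((1-h)*(1-h)) <= fx (mul_up (mul_up cup h2) (mul_up omh1 omh1))).
      { apply mup; try lra; nra. }
      unfold A; lra. }
  set (Al := (2*ONE - h2 + mul_dn (mul_dn cdn h1) (mul_dn omh2 omh2))%Z) in *.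
  set (Ah := (2*ONE - h1 + mul_up (mul_up cup h2) (mul_up omh1 omh1))%Z) in *.
  set (C := 1 - cR*(h*h)).
  assert (EC : fx (ONE - mul_up cup (mul_up h2 h2)) <= C /\ C <= fx (ONE - mul_dn cdn (mul_dn h1 h1))).
  { fxs. split.
    - assert (cR*(h*h) <= fx (mul_up cup (mul_up h2 h2))) by (apply mup; nra).
      unfold C; lra.
    - assert (fx (mul_dn cdn (mul_dn h1 h1)) <= cR*(h*h)) by (apply mdn; lra).
      unfold C; lra. }
  set (Cl := (ONE - mul_up cup (mul_up h2 h2))%Z) in *.
  set (Ch := (ONE - mul_dn cdn (mul_dn h1 h1))%Z) in *.
  assert (EF : fx (ONE - mul_up cup (mul_up omh1 omh1)) <= FR h /\ FR h <= fx (ONE - mul_dn cdn (mul_dn omh2 omh2))).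
  { fxs. unfold FR. split.
    - assert (cR*((1-h)*(1-h)) <= fx (mul_up cup (mul_up omh1 omh1))) by (apply mup; nra).
      lra.
    - assert (fx (mul_dn cdn (mul_dn omh2 omh2)) <= cR*((1-h)*(1-h))) by (apply mdn; lra).
      lra. }
  set (Fl := (ONE - mul_up cup (mul_up omh1 omh1))%Z) in *.
  set (Fh := (ONE - mul_dn cdn (mul_dn omh2 omh2))%Z) in *.
  assert (HFl : 0 < fx Fl) by (apply fx_pos; auto).
  set (G := 1 - (h*h) * FR h).
  assert (EG : fx (ONE - mul_up (mul_up h2 h2) Fh) <= G /\ G <= fx (ONE - mul_dn (mul_dn h1 h1) Fl)).
  { fxs. split.
    - assert ((h*h) * FR h <= fx (mul_up (mul_up h2 h2) Fh)) by (apply mup; nra).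
      unfold G; lra.
    - assert (fx (mul_dn (mul_dn h1 h1) Fl) <= (h*h) * FR h) by (apply mdn; lra).
      unfold G; lra. }
  set (Gl := (ONE - mul_up (mul_up h2 h2) Fh)%Z) in *.
  set (Gh := (ONE - mul_dn (mul_dn h1 h1) Fl)%Z) in *.
  assert (HAl : 0 < fx Al) by (apply fx_pos; auto).
  assert (HCl : 0 < fx Cl) by (apply fx_pos; auto).
  assert (HGl : 0 < fx Gl) by (apply fx_pos; auto).
  assert (Ho1 : 0 < fx omh1) by (apply fx_pos; auto).
  assert (Huform : uR h = A * (1-h) * C) by reflexivity.
  assert (Hvform : vR h = (h * FR h * G) * / (1-h)) by reflexivity.
  split; [|split].
  - rewrite Huform. split; [split|split].
    + apply mdn; try lra.
      * apply fx_nonneg, mul_dn_nonneg; lia.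
      * apply mdn; lra.
    + apply mup; try nra.
      apply mup; lra.
    + assert (0 < A) by lra. assert (0 < C) by lra.
      apply Rmult_lt_0_compat; [apply Rmult_lt_0_compat|]; lra.
    + apply fx_nonneg, mul_dn_nonneg; [apply mul_dn_nonneg; lia|lia].
  - assert (Hi1 : fx (inv_dn omh1) <= / (1-h)).
    { eapply Rle_trans; [apply inv_dn_le; auto|]. rewrite Eo1. apply Rinv_le_contravar; lra. }
    assert (Hi2 : / (1-h) <= fx (inv_up omh2)).
    { eapply Rle_trans; [|apply inv_up_ge; auto]. rewrite Eo2. apply Rinv_le_contravar; lra. }
    assert (Hi0 : (0 <= inv_dn omh1)%Z) by (apply inv_dn_nonneg; auto).
    assert (Hinv : 0 < / (1-h)) by (apply Rinv_0_lt_compat; lra).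
    assert (Hn1 : (0 <= mul_dn (mul_dn h1 Fl) Gl)%Z).
    { apply mul_dn_nonneg; [apply mul_dn_nonneg; lia|lia]. }
    rewrite Hvform. split; [split|split].
    + apply mdn; try lra; try (apply fx_nonneg; auto).
      apply mdn; try lra. apply fx_nonneg, mul_dn_nonneg; lia.
      apply mdn; lra.
    + apply mup; try lra.
      * assert (0 < h * FR h) by nra. nra.
      * apply mup; try nra. apply mup; lra.
    + assert (0 < h * FR h) by nra. assert (0 < h * FR h * G) by nra. nra.
    + apply fx_nonneg, mul_dn_nonneg; auto.
  - unfold yR. split; [split|].
    + eapply Rle_trans; [apply mul_dn_le|]. rewrite Eo1. nra.
    + eapply Rle_trans; [|apply mul_up_ge]. rewrite Eo2. nra.
    + apply fx_nonneg, mul_dn_nonneg; lia.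
Qed.

Lemma sqrt_le5 x : x <= 25 -> sqrt x <= 5.
Proof.
  intros H. replace 5 with (sqrt (5*5)) by (apply sqrt_square; lra).
  destruct (Rle_lt_dec 0 x). apply sqrt_le_1; lra.
  rewrite (sqrt_neg_0 x) by lra. apply sqrt_pos.
Qed.

Lemma term_bound z X L x y : zvalid z -> 0 < x -> x <= fx X -> 0 <= y ->
  fx L <= x * y -> x * y <= 25 ->
  Rpower x aR * (5 - sqrt (x * y)) <= fx (mul_up (bnd z X) (5*ONE - sqlo L)).
Proof.
  intros Hv Hx HX Hy HL H25.
  assert (Ht := tangent z x X Hv Hx HX).
  assert (Hp := Rpower_pos x aR).
  assert (Hs5 := sqrt_le5 _ H25).
  assert (Hsl : fx (sqlo L) <= sqrt (x*y)).
  { eapply Rle_trans; [apply sqlo_le|]. apply sqrt_le_1_alt; lra. }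
  eapply Rle_trans; [|apply mul_up_ge]. rewrite fx_sub, fx_mulONE.
  apply Rmult_le_compat; lra.
Qed.

Lemma cell_sound h1 h2 zu zv h : cell_check h1 h2 zu zv = true -> zvalid zu -> zvalid zv ->
  0 < h -> fx h1 <= h <= fx h2 -> Gp h.
Proof.
  intros H Hu Hv Hh Hh12. unfold cell_check in H.
  apply andb_prop in H as [H Hok]. apply andb_prop in H as [Hh1 Hh2].
  unfold cell_ok in Hok.
  apply andb_prop in Hok as [Hok Hfin]. apply andb_prop in Hok as [Hok Hsq5].
  apply andb_prop in Hok as [Hok Hvy25]. apply andb_prop in Hok as [Hok Huy25].
  apply andb_prop in Hok as [Hok PB]. apply andb_prop in Hok as [Hok PG].
  apply andb_prop in Hok as [Hok PF]. apply andb_prop in Hok as [PA PC].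
  apply Z.leb_le in Hh1. apply Z.leb_le in Hh2. apply Z.ltb_lt in Hfin. apply Z.leb_le in Hsq5.
  apply Z.leb_le in Hvy25. apply Z.leb_le in Huy25. apply Z.ltb_lt in PB. apply Z.ltb_lt in PG.
  apply Z.ltb_lt in PF. apply Z.ltb_lt in PA. apply Z.ltb_lt in PC.
  set (b := bounds h1 h2) in *.
  assert (Hhalf : h <= 1/2).
  { apply fx_le in Hh2. rewrite fx_ONE in Hh2.
    assert (fx (2*h2)%Z = 2 * fx h2) by (unfold fx; rewrite mult_IZR; field; apply Rgt_not_eq, ONE_pos).
    lra. }
  destruct (bounds_sound h1 h2 h) as [[[Ul Uh] [Up Ul0]] [[[Vl Vh] [Vp Vl0]] [[Yl Yh] Yl0]]]; auto.
  fold b in Ul, Uh, Ul0, Vl, Vh, Vl0, Yl, Yh, Yl0.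
  unfold Gp.
  set (u := uR h) in *. set (v := vR h) in *. set (y := yR h) in *.
  assert (Hy0 : 0 <= y) by lra.
  assert (Huy : u * y <= 25).
  { apply fx_le in Huy25. rewrite fx_mulONE in Huy25. eapply Rle_trans; [|exact Huy25].
    apply mup; lra. }
  assert (Hvy : v * y <= 25).
  { apply fx_le in Hvy25. rewrite fx_mulONE in Hvy25. eapply Rle_trans; [|exact Hvy25].
    apply mup; lra. }
  assert (T1 := term_bound zu (buh b) (mul_dn (bul b) (byl b)) u y Hu Up Uh Hy0
                  ltac:(apply mdn; lra) Huy).
  assert (T2 := term_bound zv (bvh b) (mul_dn (bvl b) (byl b)) v y Hv Vp Vh Hy0
                  ltac:(apply mdn; lra) Hvy).
  assert (Hbyh : (0 <= byh b)%Z) by (apply fx_nonneg_inv; lra).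
  assert (Hsq : sqrt y <= fx (sqhi (byh b))).
  { eapply Rle_trans; [|apply sqhi_ge; auto]. apply sqrt_le_1_alt; lra. }
  apply fx_le in Hsq5. rewrite fx_mulONE in Hsq5.
  assert (HK : fx Kdn <= KR /\ 0 <= fx Kdn) by (unfold fx, Kdn, ONE, KR; lra).
  assert (R1 : fx (mul_dn Kdn (5*ONE - sqhi (byh b))) <= KR * (5 - sqrt y)).
  { eapply Rle_trans; [apply mul_dn_le|]. rewrite fx_sub, fx_mulONE.
    apply Rmult_le_compat; lra. }
  apply fx_lt in Hfin. rewrite fx_add in Hfin.
  lra.
Qed.

Lemma cell_check_h1 h1 h2 zu zv : cell_check h1 h2 zu zv = true -> (0 <= h1)%Z.
Proof.
  unfold cell_check. intros H. apply andb_prop in H as [H _]. apply andb_prop in H as [H _].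
  now apply Z.leb_le.
Qed.

Import ListNotations.
Local Open Scope R_scope.

Fixpoint chk (f : nat) (hs : list Z) (h1 : Z) (zu zv : Z*Z) : bool :=
  match hs with
  | nil => Z.eqb (2*h1) ONE
  | h2 :: rest =>
      let b := bounds h1 h2 in
      let zu' := improve f (buh b) zu in
      let zv' := improve f (bvh b) zv in
      (cell_check h1 h2 zu' zv' && chk f rest h2 zu' zv')%bool
  end.

Lemma chk_sound f hs : forall h1 zu zv, chk f hs h1 zu zv = true -> zvalid zu -> zvalid zv ->
  forall h, fx h1 < h -> h <= 1/2 -> Gp h.
Proof.
  induction hs as [|h2 rest IH]; intros h1 zu zv H Hu Hv h Hh1 Hh2.
  - cbn [chk] in H. apply Z.eqb_eq in H.
    assert (E2 : fx (2*h1)%Z = 2 * fx h1) by (unfold fx; rewrite mult_IZR; field; apply Rgt_not_eq, ONE_pos).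
    rewrite H, fx_ONE in E2. lra.
  - cbn [chk] in H. cbv zeta in H. apply andb_prop in H as [HC HR].
    assert (Hu' := zvalid_improve f (buh (bounds h1 h2)) zu Hu).
    assert (Hv' := zvalid_improve f (bvh (bounds h1 h2)) zv Hv).
    destruct (Rle_lt_dec h (fx h2)) as [Hle|Hlt].
    + apply (cell_sound h1 h2 _ _ h HC Hu' Hv'); [|lra].
      apply cell_check_h1 in HC. apply fx_nonneg in HC. lra.
    + exact (IH h2 _ _ HR Hu' Hv' h Hlt Hh2).
Qed.
Definition hs_list : list Z := [811842560%Z; 2469879808%Z; 4403205120%Z; 6391463936%Z; 8343806976%Z; 10221929472%Z; 12010897408%Z; 13707990016%Z; 15314294784%Z; 16835171328%Z; 18275655680%Z; 19640856576%Z; 20936760320%Z; 22168112128%Z; 23339437056%Z; 24456251392%Z; 25521699840%Z; 26540220416%Z; 27514610688%Z; 28447725568%Z; 29343245312%Z; 30203009024%Z; 31029214208%Z; 31824768000%Z; 32591029248%Z; 33329592320%Z; 34042070016%Z; 34730875904%Z; 35396665344%Z; 36040601600%Z; 36663758848%Z; 37268194304%Z; 37854205952%Z; 38422648832%Z; 38974324736%Z; 39509978112%Z; 40031310848%Z; 40538342400%Z; 41031652352%Z; 41511746560%Z; 41979218944%Z; 42434560000%Z; 42879416320%Z; 43313328128%Z; 43736693760%Z; 44149878784%Z; 44553337856%Z; 44947388416%Z; 45333264384%Z; 45710618624%Z; 46079728640%Z; 46440861696%Z; 46794218496%Z; 47140111360%Z; 47478771712%Z; 47810485248%Z; 48136426496%Z;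 48455982080%Z; 48769335296%Z; 49076656128%Z; 49378184192%Z; 49674032128%Z; 49964338176%Z; 50249331712%Z; 50529087488%Z; 50804800512%Z; 51075721216%Z; 51342040064%Z; 51603798016%Z; 51861194752%Z; 52114319360%Z; 52363218944%Z; 52608070656%Z; 52848959488%Z; 53085899776%Z; 53319079936%Z; 53549600768%Z; 53776666624%Z; 54000351232%Z; 54220726272%Z; 54437791744%Z; 54651704320%Z; 54862529536%Z; 55070331904%Z; 55275173888%Z; 55477114880%Z; 55676215296%Z; 55872531456%Z; 56066118656%Z; 56258055168%Z; 56447490048%Z; 56634470400%Z; 56819126272%Z; 57001431040%Z; 57181426688%Z; 57359155200%Z; 57534654464%Z; 57707961344%Z; 57879109632%Z; 58048223232%Z; 58215272448%Z; 58380288000%Z; 58543297536%Z; 58704325632%Z; 58863505408%Z; 59021858816%Z; 59178439680%Z; 59333266432%Z; 59486471168%Z; 59637996544%Z; 59787854848%Z; 59936157696%Z; 60082864128%Z; 60227982336%Z; 60371614720%Z; 60513725440%Z; 60654317568%Z; 60793497600%Z; 60931220480%Z; 61067485184%Z; 61202414592%Z; 61335941120%Z; 61468149760%Z; 61599009792%Z; 61729585152%Z; 61859007488%Z; 61987205120%Z; 62114266112%Z; 62240145408%Z; 62364825600%Z; 62488446976%Z; 62610908160%Z; 62732331008%Z; 62852629504%Z; 62971910144%Z; 63090100224%Z; 63207296000%Z; 63323430912%Z; 63438595072%Z; 63552726016%Z; 63665910784%Z; 63778086912%Z; 63889342464%Z; 63999611904%Z; 64108986368%Z; 64217394176%Z;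 64325932032%Z; 64433592320%Z; 64540481536%Z; 64646505472%Z; 64751783936%Z; 64856206336%Z; 64959909888%Z; 65062865920%Z; 65165026304%Z; 65266466816%Z; 65367115776%Z; 65467071488%Z; 65566238720%Z; 65664740352%Z; 65762550784%Z; 65859622912%Z; 65956033536%Z; 66051701760%Z; 66146736128%Z; 66241021952%Z; 66334702592%Z; 66427756544%Z; 66520102912%Z; 66611851264%Z; 66702980096%Z; 66793440256%Z; 66883310592%Z; 66972495872%Z; 67062149120%Z; 67151282176%Z; 67239822336%Z; 67327870976%Z; 67415407616%Z; 67502379008%Z; 67588867072%Z; 67674765312%Z; 67760209920%Z; 67845181440%Z; 67929584640%Z; 68013544448%Z; 68097041408%Z; 68179988480%Z; 68262502400%Z; 68344564736%Z; 68426093568%Z; 68507200512%Z; 68587868160%Z; 68668014592%Z; 68747751424%Z; 68827062272%Z; 68905861120%Z; 68984263680%Z; 69062253568%Z; 69139736576%Z; 69216837632%Z; 69293541376%Z; 69369740288%Z; 69445571584%Z; 69521020928%Z; 69596071936%Z; 69670663168%Z; 69745906688%Z; 69820819456%Z; 69895320576%Z; 69969519616%Z; 70043401216%Z; 70116865024%Z; 70190041088%Z; 70262915072%Z; 70335471616%Z; 70407645184%Z; 70479531008%Z; 70551114752%Z; 70622303232%Z; 70693219328%Z; 70763849728%Z; 70834180096%Z; 70904142848%Z; 70973836288%Z; 71043246080%Z; 71112270848%Z; 71181041664%Z; 71249545216%Z; 71317769216%Z; 71385629696%Z; 71453239296%Z; 71520586752%Z; 71587658752%Z; 71654384640%Z;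 71720865792%Z; 71787088896%Z; 71853042688%Z; 71918664704%Z; 71984047104%Z; 72049177600%Z; 72113947648%Z; 72178495488%Z; 72242808832%Z; 72306877440%Z; 72370593792%Z; 72435113984%Z; 72499451904%Z; 72563596288%Z; 72627440640%Z; 72691120128%Z; 72754622464%Z; 72817937408%Z; 72880955392%Z; 72943813632%Z; 73006501888%Z; 73069008896%Z; 73131323392%Z; 73193380864%Z; 73255275520%Z; 73316995072%Z; 73378530304%Z; 73439806464%Z; 73500925952%Z; 73561878528%Z; 73622653952%Z; 73683165184%Z; 73743527936%Z; 73803731968%Z; 73863767040%Z; 73923529728%Z; 73983152128%Z; 74042624000%Z; 74101935104%Z; 74161076224%Z; 74219972608%Z; 74278727680%Z; 74337330176%Z; 74395771904%Z; 74453956608%Z; 74512008192%Z; 74569917440%Z; 74627675136%Z; 74685272064%Z; 74742632448%Z; 74799859712%Z; 74856945664%Z; 74913880064%Z; 74970560512%Z; 75027118080%Z; 75083543552%Z; 75140861952%Z; 75198071808%Z; 75255085056%Z; 75312016384%Z; 75368857600%Z; 75425599488%Z; 75482231808%Z; 75538682880%Z; 75595053056%Z; 75651333120%Z; 75707513856%Z; 75763489792%Z; 75819394048%Z; 75875217408%Z; 75930951680%Z; 75986587648%Z; 76042030080%Z; 76097401856%Z; 76152693760%Z; 76207898624%Z; 76263006208%Z; 76317928448%Z; 76372781056%Z; 76427555840%Z; 76482245632%Z; 76536841216%Z; 76591255552%Z; 76645603328%Z; 76699875328%Z; 76754064384%Z; 76808161280%Z; 76862081024%Z; 76915936256%Z;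 76969718784%Z; 77023420416%Z; 77077033984%Z; 77130471424%Z; 77183847424%Z; 77237153792%Z; 77290382336%Z; 77343524864%Z; 77396491264%Z; 77449399296%Z; 77502240768%Z; 77555007488%Z; 77607692288%Z; 77660197888%Z; 77712648192%Z; 77765036032%Z; 77818384384%Z; 77871693824%Z; 77924859904%Z; 77978013696%Z; 78031148032%Z; 78084254720%Z; 78137325568%Z; 78190248960%Z; 78243163136%Z; 78296060928%Z; 78348934144%Z; 78401774592%Z; 78454575104%Z; 78507256832%Z; 78559925248%Z; 78612572160%Z; 78665190400%Z; 78717771776%Z; 78770228224%Z; 78822675456%Z; 78875105280%Z; 78927509504%Z; 78979880960%Z; 79032119296%Z; 79084351488%Z; 79136570368%Z; 79188767744%Z; 79240936448%Z; 79292962816%Z; 79344987136%Z; 79397001216%Z; 79448998912%Z; 79500972032%Z; 79552912384%Z; 79604733952%Z; 79656549376%Z; 79708352512%Z; 79760135168%Z; 79811890176%Z; 79863514112%Z; 79915137024%Z; 79966750720%Z; 80018349056%Z; 80069923840%Z; 80121467904%Z; 80172901376%Z; 80224330752%Z; 80275748864%Z; 80327148544%Z; 80378522624%Z; 80429770752%Z; 80481019904%Z; 80533322752%Z; 80585652224%Z; 80638000128%Z; 80690249728%Z; 80742544384%Z; 80794876928%Z; 80847240192%Z; 80899625984%Z; 80952028160%Z; 81004352512%Z; 81056719872%Z; 81109122048%Z; 81161550848%Z; 81214000128%Z; 81266358272%Z; 81318763520%Z; 81371207680%Z; 81423683584%Z; 81476184064%Z; 81528700928%Z; 81581148160%Z;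 81633638400%Z; 81686165504%Z; 81738721280%Z; 81791297536%Z; 81843789824%Z; 81896330240%Z; 81948911616%Z; 82001525760%Z; 82054165504%Z; 82106822656%Z; 82159416320%Z; 82212055040%Z; 82264731648%Z; 82317437952%Z; 82370166784%Z; 82422815744%Z; 82475514880%Z; 82528256000%Z; 82581030912%Z; 82633833472%Z; 82686540800%Z; 82739302400%Z; 82792111104%Z; 82844958720%Z; 82897837056%Z; 82950739968%Z; 83003567104%Z; 83056445440%Z; 83109366784%Z; 83162323968%Z; 83216377856%Z; 83270383616%Z; 83324487680%Z; 83378682880%Z; 83432961024%Z; 83487313920%Z; 83541733376%Z; 83596129280%Z; 83650620416%Z; 83705198592%Z; 83759855616%Z; 83814583296%Z; 83869276160%Z; 83924068352%Z; 83978951680%Z; 84033917952%Z; 84088958976%Z; 84143952896%Z; 84199050240%Z; 84254242816%Z; 84309522432%Z; 84364880896%Z; 84420310016%Z; 84475717632%Z; 84531224576%Z; 84586821632%Z; 84642501632%Z; 84698255360%Z; 84753978368%Z; 84809803776%Z; 84865724416%Z; 84921731072%Z; 84977814528%Z; 85033858048%Z; 85090007040%Z; 85146254336%Z; 85202590720%Z; 85259008000%Z; 85315497984%Z; 85371975680%Z; 85428554752%Z; 85485225984%Z; 85541981184%Z; 85598812160%Z; 85655622656%Z; 85712536576%Z; 85769546752%Z; 85826643968%Z; 85884888064%Z; 85943151616%Z; 86001569792%Z; 86060133376%Z; 86118834176%Z; 86177664000%Z; 86236510208%Z; 86295514112%Z; 86354666496%Z; 86413958144%Z; 86473380864%Z;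 86532818944%Z; 86592416768%Z; 86652166144%Z; 86712057856%Z; 86772081664%Z; 86832120832%Z; 86892321792%Z; 86952676352%Z; 87013175296%Z; 87073808384%Z; 87134457856%Z; 87195271168%Z; 87256240128%Z; 87317354496%Z; 87378604032%Z; 87439872000%Z; 87501305856%Z; 87562896384%Z; 87624633344%Z; 87686507520%Z; 87748403200%Z; 87810466816%Z; 87872687104%Z; 87935054848%Z; 87997559808%Z; 88060092416%Z; 88122792960%Z; 88185651200%Z; 88248656896%Z; 88311799808%Z; 88374976512%Z; 88438321152%Z; 88501823488%Z; 88566556672%Z; 88631479296%Z; 88696499200%Z; 88761741312%Z; 88827194368%Z; 88892847104%Z; 88958569472%Z; 89024524288%Z; 89090700288%Z; 89157086208%Z; 89223671808%Z; 89290343424%Z; 89357245440%Z; 89424367616%Z; 89491698688%Z; 89559227392%Z; 89626860544%Z; 89694723072%Z; 89762803712%Z; 89831090176%Z; 89899459584%Z; 89968066560%Z; 90036900864%Z; 90105950208%Z; 90175202304%Z; 90244559872%Z; 90314151936%Z; 90383968256%Z; 90453995520%Z; 90524107776%Z; 90594463744%Z; 90665051136%Z; 90735857664%Z; 90806870016%Z; 90877995008%Z; 90949358592%Z; 91020948480%Z; 91092752384%Z; 91164651520%Z; 91237891072%Z; 91311425536%Z; 91385241600%Z; 91459203072%Z; 91533479936%Z; 91608058880%Z; 91682926592%Z; 91758069760%Z; 91833397248%Z; 91909033984%Z; 91984965632%Z; 92061178880%Z; 92137570304%Z; 92214277120%Z; 92291284992%Z; 92368579584%Z; 92446048256%Z;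 92523837440%Z; 92601932800%Z; 92680320000%Z; 92758879232%Z; 92837764096%Z; 92916960256%Z; 92996451328%Z; 93076115456%Z; 93156108288%Z; 93236415488%Z; 93317021696%Z; 93397803008%Z; 93478917120%Z; 93560347648%Z; 93642080256%Z; 93723991040%Z; 93806236672%Z; 93889895424%Z; 93973927936%Z; 94058218496%Z; 94142917632%Z; 94228008960%Z; 94313475072%Z; 94399212544%Z; 94485360640%Z; 94571901952%Z; 94658818048%Z; 94746021888%Z; 94833637376%Z; 94921645056%Z; 95009905664%Z; 95098594304%Z; 95187693568%Z; 95277184000%Z; 95366948864%Z; 95457139712%Z; 95547739136%Z; 95638726656%Z; 95730012160%Z; 95821721600%Z; 95913834496%Z; 96006215680%Z; 96099036160%Z; 96192275456%Z; 96285914112%Z; 96379848704%Z; 96474217472%Z; 96570120192%Z; 96666376192%Z; 96763162624%Z; 96860459008%Z; 96958242816%Z; 97056418816%Z; 97155118080%Z; 97254320128%Z; 97353895936%Z; 97454010368%Z; 97554639872%Z; 97655628800%Z; 97757168640%Z; 97859236864%Z; 97961808896%Z; 98064786432%Z; 98168303616%Z; 98272335872%Z; 98376763392%Z; 98481740800%Z; 98587244544%Z; 98693133312%Z; 98799583232%Z; 98906567680%Z; 99013929984%Z; 99121862656%Z; 99231475712%Z; 99341699072%Z; 99452453888%Z; 99563853824%Z; 99675872256%Z; 99788424192%Z; 99901629440%Z; 100015460352%Z; 100129828864%Z; 100244857856%Z; 100360517632%Z; 100476721152%Z; 100593590272%Z; 100711094272%Z; 100829151232%Z; 100947876864%Z;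 101067100160%Z; 101187025920%Z; 101307622400%Z; 101428728832%Z; 101550539776%Z; 101673021440%Z; 101797109760%Z; 101922008064%Z; 102047683584%Z; 102174010368%Z; 102301147136%Z; 102429060096%Z; 102557647872%Z; 102687044608%Z; 102817073152%Z; 102947942400%Z; 103079615488%Z; 103211949056%Z; 103345118208%Z; 103479084032%Z; 103613740032%Z; 103749223424%Z; 103885358080%Z; 104022349824%Z; 104160157696%Z; 104298651648%Z; 104439083008%Z; 104580438016%Z; 104722637824%Z; 104865789952%Z; 105009757184%Z; 105154706432%Z; 105300592640%Z; 105447340032%Z; 105595051008%Z; 105743596544%Z; 105893133312%Z; 106043479040%Z; 106194841600%Z; 106347171840%Z; 106500362240%Z; 106654543872%Z; 106809564160%Z; 106965599232%Z; 107123594240%Z; 107282762752%Z; 107443051520%Z; 107604355072%Z; 107766801408%Z; 107930249216%Z; 108094860288%Z; 108260461568%Z; 108427245568%Z; 108595008512%Z; 108763973632%Z; 108934079488%Z; 109105232896%Z; 109277543424%Z; 109450893312%Z; 109625413632%Z; 109802161152%Z; 109980243968%Z; 110159509504%Z; 110340124672%Z; 110521923584%Z; 110705082368%Z; 110889426944%Z; 111075140608%Z; 111262043136%Z; 111450321920%Z; 111639792640%Z; 111830644736%Z; 112022693888%Z; 112216126464%Z; 112411957248%Z; 112609341440%Z; 112808108032%Z; 113008429056%Z; 113210145792%Z; 113413414912%Z; 113618093056%Z; 113824318464%Z; 114031967232%Z; 114241154048%Z; 114451779584%Z; 114663778304%Z; 114878465024%Z; 115094727680%Z; 115312768000%Z;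 115532407808%Z; 115753807872%Z; 115976830976%Z; 116201594880%Z; 116428004352%Z; 116656002048%Z; 116885794816%Z; 117117201408%Z; 117350372352%Z; 117586354176%Z; 117824123904%Z; 118063907840%Z; 118305511424%Z; 118549091328%Z; 118794521600%Z; 119041752064%Z; 119290993664%Z; 119542067200%Z; 119795100672%Z; 120049994752%Z; 120307986432%Z; 120568180736%Z; 120830446592%Z; 121094743040%Z; 121361256448%Z; 121629834240%Z; 121900435456%Z; 122173256704%Z; 122448134144%Z; 122726175744%Z; 123006667776%Z; 123289454592%Z; 123574499328%Z; 123861979136%Z; 124151754752%Z; 124443789312%Z; 124738227200%Z; 125034957824%Z; 125335119872%Z; 125637767168%Z; 125943097344%Z; 126250949632%Z; 126561293312%Z; 126874096640%Z; 127189583872%Z; 127507562496%Z; 127829112832%Z; 128153372672%Z; 128480567296%Z; 128810506240%Z; 129143161856%Z; 129478505472%Z; 129816730624%Z; 130157668352%Z; 130502494208%Z; 130850277376%Z; 131200993280%Z; 131554846720%Z; 131911655424%Z; 132271390720%Z; 132634027008%Z; 133000690688%Z; 133370713088%Z; 133743940608%Z; 134120347648%Z; 134499908608%Z; 134882595840%Z; 135268381696%Z; 135658484736%Z; 136052177920%Z; 136449278976%Z; 136849761280%Z; 137253596160%Z; 137660753920%Z; 138072342528%Z; 138487553024%Z; 138906357760%Z; 139328727040%Z; 139754629120%Z; 140184240128%Z; 140618496000%Z; 141056592896%Z; 141498497024%Z; 141944173568%Z; 142393584640%Z; 142846691328%Z; 143304734720%Z; 143766792192%Z; 144232824832%Z;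 144702788608%Z; 145176639488%Z; 145655468032%Z; 146138508288%Z; 146625713152%Z; 147117032448%Z; 147612413952%Z; 148112890880%Z; 148617755648%Z; 149126952960%Z; 149640423424%Z; 150158103552%Z; 150681068544%Z; 151208567808%Z; 151740532736%Z; 152276701184%Z; 152817219584%Z; 153363308544%Z; 153914072064%Z; 154469429248%Z; 155029296128%Z; 155594657792%Z; 156164845568%Z; 156739766272%Z; 157319322624%Z; 157903249408%Z; 158493089792%Z; 159087827968%Z; 159687353344%Z; 160291549184%Z; 160901665792%Z; 161516551168%Z; 162136349696%Z; 162760931328%Z; 163391546368%Z; 164027226112%Z; 164667827200%Z; 165313062912%Z; 165964488704%Z; 166621041664%Z; 167282561024%Z; 167949753344%Z; 168622265344%Z; 169299922944%Z; 169982544896%Z; 170671034368%Z; 171364832256%Z; 172063742976%Z; 172767563776%Z; 173477511168%Z; 174192699392%Z; 174912909312%Z; 175639300096%Z; 176370759680%Z; 177107329024%Z; 177849958400%Z; 178597672960%Z; 179350555648%Z; 180108345344%Z; 180872271872%Z; 181641396224%Z; 182415437824%Z; 183195515904%Z; 183980787712%Z; 184770954240%Z; 185567089664%Z; 186368380928%Z; 187174508544%Z; 187986568192%Z; 188803707904%Z; 189625588736%Z; 190453391360%Z; 191286160384%Z; 192124596224%Z; 192967916544%Z; 193816047616%Z; 194669585408%Z; 195528129536%Z; 196391288832%Z; 197259914240%Z; 198133329920%Z; 199010861056%Z; 199894196224%Z; 200782062592%Z; 201674993664%Z; 202572599296%Z; 203474172928%Z; 204381180928%Z; 205292539904%Z;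 206207647744%Z; 207128188928%Z; 208052482048%Z; 208981868544%Z; 209915331584%Z; 210852278272%Z; 211794325504%Z; 212739832832%Z; 213690119168%Z; 214643830784%Z; 215602009088%Z; 216563942400%Z; 217528965120%Z; 218498477056%Z; 219471014912%Z; 220447744000%Z; 221427743744%Z; 222410384384%Z; 223397246976%Z; 224386657280%Z; 225380008960%Z; 226375801856%Z; 227375263744%Z; 228377421824%Z; 229382612992%Z; 230390479872%Z; 231400200192%Z; 232413380608%Z; 233428610048%Z; 234446708736%Z; 235466817536%Z; 236489433088%Z; 237514014720%Z; 238541085696%Z; 239569729536%Z; 240599673856%Z; 241631962112%Z; 242665494528%Z; 243701390336%Z; 244738086912%Z; 245776942080%Z; 246816374784%Z; 247857766400%Z; 248899972096%Z; 249943474176%Z; 250987724800%Z; 252033324032%Z; 253079184384%Z; 254126220288%Z; 255173639168%Z; 256221676544%Z; 257270031360%Z; 258318085120%Z; 259366931456%Z; 260415414272%Z; 261464705024%Z; 262513163264%Z; 263562289152%Z; 264610714624%Z; 265659219968%Z; 266706966528%Z; 267754912768%Z; 268801513472%Z; 269848193024%Z; 270893808640%Z; 271939195904%Z; 272983018496%Z; 274026505216%Z; 275068649472%Z; 276110173184%Z; 277149885440%Z; 278188882944%Z; 279226287104%Z; 280262715392%Z; 281297051648%Z; 282330324992%Z; 283361785856%Z; 284391944192%Z; 285420114944%Z; 286446481408%Z; 287470842880%Z; 288492661760%Z; 289513265152%Z; 290531183616%Z; 291547324416%Z; 292560773120%Z; 293572730880%Z; 294581875712%Z; 295589341184%Z;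 296593886208%Z; 297596574720%Z; 298595887104%Z; 299593267200%Z; 300587639808%Z; 301579913216%Z; 302569103360%Z; 303556034560%Z; 304539819008%Z; 305521192960%Z; 306499368960%Z; 307474989056%Z; 308447370240%Z; 309416672256%Z; 310382747648%Z; 311345149952%Z; 312305179648%Z; 313261515776%Z; 314215340032%Z; 315165458432%Z; 316112927744%Z; 317056689152%Z; 317997664256%Z; 318934935552%Z; 319869285376%Z; 320799942656%Z; 321727542272%Z; 322651466752%Z; 323571316736%Z; 324488396800%Z; 325401431040%Z; 326311553024%Z; 327218081792%Z; 328121602048%Z; 329021198336%Z; 329917644800%Z; 330810214400%Z; 331699487744%Z; 332584934400%Z; 333466187776%Z; 334344411136%Z; 335218494464%Z; 336089383936%Z; 336956186624%Z; 337820140544%Z; 338680168448%Z; 339535920128%Z; 340388644864%Z; 341237154816%Z; 342082447360%Z; 342923584512%Z; 343761845248%Z; 344596146176%Z; 345426151424%Z; 346253068288%Z; 347075748864%Z; 347895569408%Z; 348711372800%Z; 349523793920%Z; 350332255232%Z; 351136427008%Z; 351937826816%Z; 352735176704%Z; 353529204736%Z; 354319232000%Z; 355104933888%Z; 355888013312%Z; 356667019264%Z; 357442709504%Z; 358214364160%Z; 358982279168%Z; 359747150848%Z; 360507926528%Z; 361265775616%Z; 362019795968%Z; 362769670144%Z; 363516408832%Z; 364259593216%Z; 364999532544%Z; 365735613440%Z; 366468007936%Z; 367197370368%Z; 367922830336%Z; 368644070400%Z; 369362916352%Z; 370077820928%Z; 370789455872%Z; 371497862144%Z; 372202289152%Z;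 372903593984%Z; 373601653760%Z; 374295697408%Z; 374987247616%Z; 375675063296%Z; 376359705600%Z; 377041156096%Z; 377718832128%Z; 378393418752%Z; 379064881152%Z; 379732523008%Z; 380397644800%Z; 381059222528%Z; 381716928512%Z; 382372320256%Z; 383024111616%Z; 383672491008%Z; 384318241792%Z; 384960328704%Z; 385599165440%Z; 386235352064%Z; 386868412416%Z; 387497790464%Z; 388124954624%Z; 388748698624%Z; 389368680448%Z; 389986666496%Z; 390601144320%Z; 391212465152%Z; 391821304832%Z; 392427152384%Z; 393029469184%Z; 393629713408%Z; 394226670592%Z; 394820477952%Z; 395411934208%Z; 395999983616%Z; 396585164800%Z; 397167797248%Z; 397747760128%Z; 398324272128%Z; 398898862080%Z; 399470222336%Z; 400038838272%Z; 400604877824%Z; 401168391168%Z; 401728615424%Z; 402286855168%Z; 402842009600%Z; 403394612224%Z; 403943857152%Z; 404491440128%Z; 405036363776%Z; 405578236928%Z; 406118189056%Z; 406655278080%Z; 407189740544%Z; 407721066496%Z; 408250792960%Z; 408777556992%Z; 409301755904%Z; 409823735808%Z; 410343410688%Z; 410860009472%Z; 411374928896%Z; 411887507456%Z; 412397291520%Z; 412904572928%Z; 413409773568%Z; 413912744960%Z; 414412780544%Z; 414910441472%Z; 415406614528%Z; 415900118016%Z; 416391254016%Z; 416880318464%Z; 417367300096%Z; 417851935744%Z; 418333867008%Z; 418814345216%Z; 419292227584%Z; 419767939072%Z; 420240755712%Z; 420712399872%Z; 421181919232%Z; 421648779264%Z; 422114197504%Z; 422577547264%Z; 423038464000%Z;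 423497224192%Z; 423954073600%Z; 424409066496%Z; 424861976576%Z; 425312358400%Z; 425761441792%Z; 426208054272%Z; 426652815360%Z; 427095507968%Z; 427536417792%Z; 427975566336%Z; 428412742656%Z; 428847464448%Z; 429281003520%Z; 429712673792%Z; 430142069760%Z; 430569548800%Z; 430995716096%Z; 431419780096%Z; 431842041856%Z; 432261859328%Z; 432680578048%Z; 433097614336%Z; 433512360960%Z; 433925392384%Z; 434336525312%Z; 434746174464%Z; 435154238464%Z; 435560538112%Z; 435964488704%Z; 436367549440%Z; 436768985088%Z; 437168198656%Z; 437565770752%Z; 437962298368%Z; 438356720640%Z; 438749646848%Z; 439140912128%Z; 439530354688%Z; 439918574592%Z; 440305287168%Z; 440690332672%Z; 441073306624%Z; 441455391744%Z; 441835969536%Z; 442214563840%Z; 442591652864%Z; 442967087104%Z; 443341207552%Z; 443713988608%Z; 444085281792%Z; 444454941696%Z; 444822606848%Z; 445189654528%Z; 445555240960%Z; 445918887936%Z; 446281090048%Z; 446642483200%Z; 447001982976%Z; 447360212992%Z; 447717038080%Z; 448072324096%Z; 448426438656%Z; 448779327488%Z; 449130859520%Z; 449480417280%Z; 449828644864%Z; 450176267264%Z; 450522589184%Z; 450867102720%Z; 451210344448%Z; 451552191488%Z; 451893377024%Z; 452232907776%Z; 452571232256%Z; 452908231680%Z; 453243290624%Z; 453577894912%Z; 453911365632%Z; 454243586048%Z; 454573998080%Z; 454903198720%Z; 455231865856%Z; 455559363584%Z; 455885172736%Z; 456209853440%Z; 456533296128%Z; 456856118272%Z; 457177359360%Z;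 457497559040%Z; 457816610816%Z; 458134409216%Z; 458450461696%Z; 458766209024%Z; 459080902656%Z; 459394440192%Z; 459706315776%Z; 460017085440%Z; 460327439360%Z; 460636738560%Z; 460944446464%Z; 461251150848%Z; 461556753408%Z; 461861158912%Z; 462164696064%Z; 462467335168%Z; 462768980992%Z; 463069539328%Z; 463368918016%Z; 463667473408%Z; 463965146112%Z; 464261844992%Z; 464557478912%Z; 464851563520%Z; 465144641536%Z; 465437455360%Z; 465729321984%Z; 466019660800%Z; 466309110784%Z; 466597585920%Z; 466885001216%Z; 467172147200%Z; 467457917952%Z; 467742835712%Z; 468026816512%Z; 468309778432%Z; 468591132672%Z; 468872428544%Z; 469152913408%Z; 469432506368%Z; 469711127552%Z; 469988268032%Z; 470264501248%Z; 470540643328%Z; 470815943680%Z; 471090324480%Z; 471363337216%Z; 471635496960%Z; 471906727936%Z; 472177823744%Z; 472448057344%Z; 472717020160%Z; 472985188352%Z; 473252487168%Z; 473518845952%Z; 473785014272%Z; 474049995776%Z; 474314244096%Z; 474577688576%Z; 474840258560%Z; 475101885440%Z; 475362940928%Z; 475623330816%Z; 475882984448%Z; 476141834240%Z; 476399812608%Z; 476656520192%Z; 476913098752%Z; 477169013760%Z; 477424198656%Z; 477678586880%Z; 477931748352%Z; 478184184832%Z; 478435831808%Z; 478687394816%Z; 478938240000%Z; 479187887104%Z; 479436887040%Z; 479685178368%Z; 479932697600%Z; 480179384320%Z; 480425533440%Z; 480671117312%Z; 480916075520%Z; 481160346624%Z; 481403870208%Z; 481646586880%Z; 481888756736%Z;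 482130384896%Z; 482371412992%Z; 482611781632%Z; 482851432448%Z; 483089828864%Z; 483327582208%Z; 483565360128%Z; 483802568704%Z; 484039150592%Z; 484275049472%Z; 484509799424%Z; 484743941120%Z; 484977419264%Z; 485210910720%Z; 485443813376%Z; 485676072960%Z; 485907271680%Z; 486137902080%Z; 486367909888%Z; 486597242880%Z; 486826564608%Z; 487054773248%Z; 487282509824%Z; 487509721088%Z; 487736355840%Z; 487962362880%Z; 488187691008%Z; 488412469248%Z; 488636821504%Z; 488860696576%Z; 489084043264%Z; 489306812416%Z; 489528953856%Z; 489749911552%Z; 489970318336%Z; 490190927872%Z; 490411062272%Z; 490630672384%Z; 490849710080%Z; 491068128256%Z; 491285516288%Z; 491502360576%Z; 491719343104%Z; 491935857664%Z; 492151857152%Z; 492367295488%Z; 492581720064%Z; 492795660288%Z; 493009070080%Z; 493221903360%Z; 493434919936%Z; 493647436800%Z; 493858941952%Z; 494070024192%Z; 494280637440%Z; 494490738688%Z; 494700282880%Z; 494909921280%Z; 495119079424%Z; 495327332352%Z; 495535181824%Z; 495742583808%Z; 495949495296%Z; 496155874304%Z; 496361678848%Z; 496567120896%Z; 496772226048%Z; 496976951296%Z; 497181253632%Z; 497385093120%Z; 497588427776%Z; 497791216640%Z; 497992992768%Z; 498195045376%Z; 498396746752%Z; 498598054912%Z; 498798929920%Z; 498999331840%Z; 499199221760%Z; 499398160384%Z; 499596663808%Z; 499795434496%Z; 499993844736%Z; 500191856640%Z; 500389430272%Z; 500586526720%Z; 500782720000%Z; 500978513920%Z; 501173869568%Z;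 501369470976%Z; 501564709888%Z; 501759548416%Z; 501953949696%Z; 502147480576%Z; 502340649984%Z; 502533421056%Z; 502725756928%Z; 502918304768%Z; 503110493184%Z; 503302285312%Z; 503493225472%Z; 503683845120%Z; 503874108416%Z; 504063979520%Z; 504253422592%Z; 504443033600%Z; 504632292352%Z; 504820703232%Z; 505008837632%Z; 505196659712%Z; 505384135680%Z; 505571229696%Z; 505757907968%Z; 505944135680%Z; 506130068480%Z; 506315770880%Z; 506501208064%Z; 506686346240%Z; 506871150592%Z; 507055588352%Z; 507239625728%Z; 507423229952%Z; 507606540288%Z; 507789634560%Z; 507972478976%Z; 508155039744%Z; 508337284096%Z; 508519180288%Z; 508700694528%Z; 508881795072%Z; 509062052864%Z; 509242636288%Z; 509422987264%Z; 509603075072%Z; 509782866944%Z; 509962331136%Z; 510141435904%Z; 510319648768%Z; 510497576960%Z; 510675189760%Z; 510853144576%Z; 511030857728%Z; 511208298496%Z; 511385436160%Z; 511562238976%Z; 511738192896%Z; 511913887744%Z; 512089292800%Z; 512264377344%Z; 512439808000%Z; 512614991872%Z; 512789899264%Z; 512964500480%Z; 513138280448%Z; 513311828992%Z; 513485115392%Z; 513658109952%Z; 513830784000%Z; 514003798016%Z; 514176565248%Z; 514349054976%Z; 514520739840%Z; 514692221952%Z; 514863471616%Z; 515034461184%Z; 515205160960%Z; 515375543296%Z; 515546250240%Z; 515716712448%Z; 515886370816%Z; 516055858176%Z; 516225145856%Z; 516394206208%Z; 516563010560%Z; 516731531264%Z; 516899740672%Z; 517068249088%Z; 517236518912%Z;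 517404073984%Z; 517571464192%Z; 517738660864%Z; 517905637376%Z; 518072366080%Z; 518238819328%Z; 518404970496%Z; 518570792960%Z; 518736472064%Z; 518902021120%Z; 519067413504%Z; 519232621568%Z; 519397619712%Z; 519562380288%Z; 519726877696%Z; 519891085312%Z; 520054977536%Z; 520218731520%Z; 520382366720%Z; 520545856512%Z; 520709175296%Z; 520872296448%Z; 521035193344%Z; 521197840384%Z; 521360212992%Z; 521522284544%Z; 521684202496%Z; 521846013952%Z; 522007694336%Z; 522169218048%Z; 522330558464%Z; 522491691008%Z; 522652590080%Z; 522813231104%Z; 522973064192%Z; 523132710912%Z; 523292786688%Z; 523452746752%Z; 523612566528%Z; 523772220416%Z; 523931684864%Z; 524090934272%Z; 524249944064%Z; 524408172544%Z; 524566234112%Z; 524724103168%Z; 524882426880%Z; 525040629760%Z; 525198686208%Z; 525356571648%Z; 525514262528%Z; 525671734272%Z; 525828441088%Z; 525985000448%Z; 526141387776%Z; 526297579520%Z; 526454246400%Z; 526610787328%Z; 526767179776%Z; 526923399168%Z; 527079421952%Z; 527235224576%Z; 527390359552%Z; 527545345024%Z; 527700157440%Z; 527855363072%Z; 528010465280%Z; 528165441536%Z; 528320268288%Z; 528474923008%Z; 528629381120%Z; 528783163392%Z; 528936820736%Z; 529090329600%Z; 529243667456%Z; 529397403648%Z; 529551037440%Z; 529704546304%Z; 529857907712%Z; 530011099136%Z; 530163596288%Z; 530315993088%Z; 530468267008%Z; 530620395520%Z; 530772356096%Z; 530924715008%Z; 531076975616%Z; 531229114368%Z; 531381109760%Z;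 531532939264%Z; 531684139008%Z; 531835242496%Z; 531986227200%Z; 532137071616%Z; 532287753216%Z; 532438827008%Z; 532589806592%Z; 532740670464%Z; 532891396096%Z; 533041455104%Z; 533191445504%Z; 533341344768%Z; 533491131392%Z; 533640784896%Z; 533790282752%Z; 533939603456%Z; 534089395200%Z; 534239078400%Z; 534388631552%Z; 534537560064%Z; 534686427136%Z; 534835211264%Z; 534983890944%Z; 535132444672%Z; 535280851968%Z; 535429091328%Z; 535577785344%Z; 535726379008%Z; 535874851840%Z; 536022733824%Z; 536170563584%Z; 536318318592%Z; 536465978368%Z; 536613522432%Z; 536760929280%Z; 536908178432%Z; 537055861760%Z; 537203454976%Z; 537350394880%Z; 537497312256%Z; 537644186624%Z; 537790997504%Z; 537937723392%Z; 538084343808%Z; 538230838272%Z; 538377186304%Z; 538523944960%Z; 538670624768%Z; 538816667648%Z; 538962699264%Z; 539108699136%Z; 539254646784%Z; 539400521728%Z; 539546302464%Z; 539691969536%Z; 539837502464%Z; 539982880768%Z; 540128731136%Z; 540273954816%Z; 540419178496%Z; 540564382720%Z; 540709547008%Z; 540854650880%Z; 540999673856%Z; 541144596480%Z; 541289398272%Z; 541434058752%Z; 541579161600%Z; 541724190720%Z; 541868681216%Z; 542013164544%Z; 542157621248%Z; 542302030848%Z; 542446373888%Z; 542590629888%Z; 542734779392%Z; 542878801920%Z; 543023236096%Z; 543167609856%Z; 543311439872%Z; 543455277056%Z; 543599101952%Z; 543742893056%Z; 543886631936%Z; 544030298112%Z; 544173872128%Z; 544317334528%Z; 544460664832%Z;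 544604461056%Z; 544747702272%Z; 544890964992%Z; 545034229760%Z; 545177476096%Z; 545320684544%Z; 545463835648%Z; 545606909952%Z; 545749888000%Z; 545892750336%Z; 546036043776%Z; 546178765824%Z; 546321523712%Z; 546464299008%Z; 546607071232%Z; 546749820928%Z; 546892528640%Z; 547035175936%Z; 547177742336%Z; 547320209408%Z; 547462556672%Z; 547605387264%Z; 547747708928%Z; 547890062336%Z; 548032429056%Z; 548174789632%Z; 548317124608%Z; 548459414528%Z; 548601639936%Z; 548743782400%Z; 548885821440%Z; 549028310016%Z; 549170262016%Z; 549312262144%Z; 549454290944%Z; 549596329984%Z; 549738359808%Z; 549755813888%Z].

Lemma chk_top : chk 5000 hs_list 0 z0 z0 = true.
Proof. vm_cast_no_check (eq_refl true). Qed.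

Lemma all_G h : 0 < h <= 1/2 -> Gp h.
Proof.
  intros Hh. apply (chk_sound 5000 hs_list 0 z0 z0 chk_top zvalid_z0 zvalid_z0 h); [|lra].
  rewrite fx0. lra.
Qed.

Local Open Scope R_scope.

Lemma gg_eq y : 0 < y -> Rpower y aR * (5 - sqrt y) = gg y.
Proof.
  intros Hy. unfold gg, bR. rewrite Rpower_plus, Rpower_sqrt by lra. ring.
Qed.

Lemma psi_eq x : 0 < x < 1 -> psi x = gg (x * (1 - x)).
Proof.
  intros Hx. assert (Hy : 0 < x * (1 - x)) by nra.
  unfold psi, rpow. destruct (Rle_dec (x * (1 - x)) 0) as [C|C]; [lra|].
  rewrite <- gg_eq by lra. reflexivity.
Qed.

Lemma psi_sym x : psi (1 - x) = psi x.
Proof. unfold psi. replace ((1 - x) * (1 - (1 - x))) with (x * (1 - x)) by ring. reflexivity. Qed.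

Lemma gg_pos y : 0 < y <= /4 -> 0 < gg y.
Proof.
  intros Hy. rewrite <- gg_eq by lra. apply Rmult_lt_0_compat. apply Rpower_pos.
  assert (sqrt y <= 5) by (apply sqrt_le5; lra). 
  assert (sqrt y < 5).
  { assert (sqrt y <= sqrt (/4)) by (apply sqrt_le_1_alt; lra).
    assert (sqrt (/4) < 5).
    { apply Rsqr_incrst_0; [|apply sqrt_pos|lra]. rewrite Rsqr_sqrt by lra. unfold Rsqr. lra. }
    lra. }
  lra.
Qed.

Lemma core h E : 0 < h <= 1/2 -> 9/7 * h * (1 - h) <= E -> E <= 2 * h ->
  psi (2*h - h*h + E*E/12) + psi (h*h - E*E/12) < KR * psi h.
Proof.
  intros Hh HE1 HE2.
  set (E0 := 9/7 * h * (1 - h)).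
  set (Hs0 := 2*h - h*h + E0*E0/12). set (Hp0 := h*h - E0*E0/12).
  set (d := (E*E - E0*E0)/12).
  assert (HE0 : 0 <= E0) by (unfold E0; nra).
  assert (HEE : E0 <= E) by (unfold E0; lra).
  assert (Hd : 0 <= d) by (unfold d; assert (0 <= (E - E0)*(E+E0)) by (apply Rmult_le_pos; lra); nra).
  assert (EHs : 2*h - h*h + E*E/12 = Hs0 + d) by (unfold Hs0, d; field).
  assert (EHp : h*h - E*E/12 = Hp0 - d) by (unfold Hp0, d; field).
  rewrite EHs, EHp.
  assert (Hp_pos : 0 < Hp0 - d) by (rewrite <- EHp; nra).
  assert (Hp0_le : Hp0 <= h*h) by (unfold Hp0; nra).
  assert (Hs_lt : Hs0 + d < 1) by (rewrite <- EHs; nra).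
  assert (Hsp : Hs0 + Hp0 = 2*h) by (unfold Hs0, Hp0; ring).
  assert (Hhh : h*h <= h) by nra.
  assert (Hs0p : Hp0 <= Hs0) by lra.
  assert (Hs0pos : 0 < Hs0) by lra.
  assert (G := all_G h ltac:(lra)). unfold Gp in G.
  assert (Ey : 0 < yR h) by (unfold yR; nra).
  assert (Eu : Hs0 * (1 - Hs0) = uR h * yR h) by (unfold Hs0, E0, uR, yR, cR; field).
  assert (Ev : Hp0 * (1 - Hp0) = vR h * yR h) by (unfold Hp0, E0, vR, FR, yR, cR; field; lra).
  assert (Hs0lt : Hs0 < 1) by lra.
  assert (Hp0pos : 0 < Hp0) by lra.
  assert (Hp0lt : Hp0 < 1) by nra.
  assert (Pu : 0 < uR h) by (assert (0 < Hs0 * (1 - Hs0)) by nra; apply (Rmult_lt_reg_r (yR h)); lra).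
  assert (Pv : 0 < vR h) by (assert (0 < Hp0 * (1 - Hp0)) by nra; apply (Rmult_lt_reg_r (yR h)); lra).
  assert (HG : psi Hs0 + psi Hp0 < KR * psi h).
  { rewrite !psi_eq by lra. rewrite Eu, Ev, <- !gg_eq by nra.
    change (h * (1 - h)) with (yR h).
    rewrite <- !Rpower_mult_distr by lra.
    assert (Hpy := Rpower_pos (yR h) aR).
    set (Y := Rpower (yR h) aR) in *.
    assert (Y * (Rpower (uR h) aR * (5 - sqrt (uR h * yR h)) + Rpower (vR h) aR * (5 - sqrt (vR h * yR h)))
            < Y * (KR * (5 - sqrt (yR h)))) by (apply Rmult_lt_compat_l; lra).
    lra. }
  assert (Hsw : gg ((Hs0 + d) * (1 - (Hs0 + d))) + gg ((Hp0 - d) * (1 - (Hp0 - d)))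
              <= gg (Hs0 * (1 - Hs0)) + gg (Hp0 * (1 - Hp0))).
  { assert (Hp0q : Hp0 <= 1/4) by nra.
    apply concave_swap.
    - apply Rmult_lt_0_compat; lra.
    - assert (Hp0 * (1 - Hp0) - (Hp0 - d) * (1 - (Hp0 - d)) = d * (1 - 2*Hp0 + d)) by ring.
      assert (0 <= d * (1 - 2*Hp0 + d)) by (apply Rmult_le_pos; lra). lra.
    - assert (Hs0 * (1 - Hs0) - Hp0 * (1 - Hp0) = (Hs0 - Hp0) * (1 - Hs0 - Hp0)) by ring.
      assert (0 <= (Hs0 - Hp0) * (1 - Hs0 - Hp0)) by (apply Rmult_le_pos; lra). lra.
    - replace (/4) with (1/4) by field.
      assert (0 <= (Hs0 - 1/2) * (Hs0 - 1/2)) by apply Rle_0_sqr. lra.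
    - apply Rmult_lt_0_compat; lra.
    - replace (/4) with (1/4) by field.
      assert (0 <= (Hs0 + d - 1/2) * (Hs0 + d - 1/2)) by apply Rle_0_sqr. lra.
    - assert ((Hp0 * (1 - Hp0) - (Hp0 - d) * (1 - (Hp0 - d))) - ((Hs0 + d) * (1 - (Hs0 + d)) - Hs0 * (1 - Hs0))
              = d * (2*Hs0 - 2*Hp0 + 2*d)) by ring.
      assert (0 <= d * (2*Hs0 - 2*Hp0 + 2*d)) by (apply Rmult_le_pos; lra). lra. }
  rewrite !psi_eq by lra. rewrite !psi_eq in HG by lra. lra.
Qed.

Theorem mainTheorem10 (W : TEC) :
  valid W -> balanced W ->
  0 < entropy W < 1 ->
  quetelet W >= 9 / 7 ->
  (psi (entropy (serial_child W)) + psi (entropy (parallel_child W)))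
    / (2 * psi (entropy W)) < 818 / 1000.
Proof.
  destruct W as [p q r s t].
  unfold Defs.valid, balanced, quetelet, edge_mass, serial_child, parallel_child, entropy. cbn.
  intros [Hp [Hq [Hr [Hs [Ht Hsum]]]]] [Eqr Ers] HH HQ.
  subst r s.
  set (H := (q + q + q) / 2 + t) in *.
  set (E := q + q + q) in *.
  assert (Hy : 0 < H * (1 - H)) by nra.
  assert (HE : 9/7 * H * (1 - H) <= E).
  { assert (HQ' : 9/7 <= E / (H*(1-H))) by lra.
    assert (Heq : E / (H*(1-H)) * (H*(1-H)) = E) by (field; lra).
    assert (9/7 * (H*(1-H)) <= E / (H*(1-H)) * (H*(1-H))) by (apply Rmult_le_compat_r; lra).
    lra. }
  assert (Hp' : p = 1 - E - t) by (unfold E; lra).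
  match goal with |- (psi ?a + psi ?b) / _ < _ =>
    assert (Ea : a = 2*H - H*H + E*E/12) by (unfold H, E; rewrite Hp'; unfold E; field);
    assert (Eb : b = H*H - E*E/12) by (unfold H, E; field) end.
  rewrite Ea, Eb.
  assert (Hpsi : 0 < psi H).
  { rewrite psi_eq by lra. apply gg_pos. split; [lra|]. replace (/4) with (1/4) by field.
    assert (0 <= (H - 1/2) * (H - 1/2)) by apply Rle_0_sqr. lra. }
  assert (Key : psi (2*H - H*H + E*E/12) + psi (H*H - E*E/12) < KR * psi H).
  { destruct (Rle_lt_dec H (1/2)) as [Hle|Hgt].
    - apply core; try lra. unfold H, E; lra.
    - assert (K := core (1 - H) E ltac:(lra) ltac:(nra) ltac:(unfold H, E; lra)).
      rewrite psi_sym in K.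
      replace (2*(1-H) - (1-H)*(1-H) + E*E/12) with (1 - (H*H - E*E/12)) in K by ring.
      replace ((1-H)*(1-H) - E*E/12) with (1 - (2*H - H*H + E*E/12)) in K by ring.
      rewrite !psi_sym in K. lra. }
  unfold KR in Key.
  apply Rmult_lt_reg_r with (2 * psi H); [lra|].
  unfold Rdiv. rewrite Rmult_assoc, Rinv_l by lra. lra.
Qed.
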